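(* Let $A$ be a commutative semiring and $\rho$ a maximal congruence on $A$. If $\rho=\rho_+$, then $\rho$ is a prime congruence.
   Context: Semirings are commutative with $0$ and $1\neq0$, $0a=0$; congruences are equivalence relations compatible with $+,\cdot$. A congruence $\rho\neq A\times A$ is maximal if any congruence $\tau$ with $\rho\subseteq\tau$ is $\rho$ or $A\times A$. Twisted product $(a,b)\ast(c,d)=(ac+bd,ad+bc)$; a congruence $\rho\ne A\times A$ is prime if $(a,b)\ast(c,d)\in\rho$ implies $(a,b)\in\rho$ or $(c,d)\in\rho$. $\rho_+=\{(a,b):(a+c,b+c)\in\rho$ for some $c\in A\}$. *)

(* Defs.v *)
(* Commutative semirings with 0, 1 <> 0, 0a = 0:
   mathcomp's comNzSemiRingType. Congruences as Prop-valued relations. *)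
From mathcomp Require Import all_boot all_algebra.
Set Implicit Arguments. Unset Strict Implicit. Unset Printing Implicit Defensive.
Import GRing.Theory.
Local Open Scope ring_scope.

Section SemiringCongruences.
Variable A : comNzSemiRingType.

Definition srel := A -> A -> Prop.

Definition is_congruence (r : srel) : Prop :=
  [/\ (forall a, r a a),
      (forall a b, r a b -> r b a),
      (forall a b c, r a b -> r b c -> r a c),
      (forall a b c d, r a b -> r c d -> r (a + c) (b + d)) &
      (forall a b c d, r a b -> r c d -> r (a * c) (b * d))].

Definition full_rel : srel := fun _ _ => True.

Definition proper_rel (r : srel) : Prop := exists a b, ~ r a b.

Definition maximal_congruence (r : srel) : Prop :=
  [/\ is_congruence r, proper_rel r &
      forall t : srel, is_congruence t -> (forall a b, r a b -> t a b) ->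
        (forall a b, t a b <-> r a b) \/ (forall a b, t a b)].

Definition twisted (p q : A * A) : A * A :=
  (p.1 * q.1 + p.2 * q.2, p.1 * q.2 + p.2 * q.1).

Definition prime_congruence (r : srel) : Prop :=
  [/\ is_congruence r, proper_rel r &
      forall p q : A * A, r (twisted p q).1 (twisted p q).2 ->
        r p.1 p.2 \/ r q.1 q.2].

Definition rel_plus (r : srel) : srel :=
  fun a b => exists c, r (a + c) (b + c).

End SemiringCongruences.

(* Main.v *)
Require Import Defs.
From mathcomp Require Import all_boot all_algebra.
From mathcomp Require Import ring.
Import GRing.Theory.
Local Open Scope ring_scope.

Theorem proposition2p23 (A : comNzSemiRingType) (rho : A -> A -> Prop) :
  maximal_congruence rho ->
  (forall a b, rho a b <-> rel_plus rho a b) ->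
  prime_congruence rho.
Proof.
move=> [[Rr Rs Rt RD RM] Hp Hmax] Hplus.
have eqR : forall x y, x = y -> rho x y by move=> x y ->.
split; [by split | exact: Hp | ].
move=> [a b] [c d] /= H.
pose tau := fun x y => rho (x * a + y * b) (x * b + y * a).
have Tc : is_congruence tau.
  split.
  - by move=> x; rewrite /tau addrC.
  - move=> x y; rewrite /tau => h; apply: Rs; apply: Rt (eqR _ _ _) (Rt _ _ _ h (eqR _ _ _)); ring.
  - move=> x y z; rewrite /tau => h1 h2.
    have h := RD _ _ _ _ h1 h2.
    apply/Hplus; exists (y * a + y * b).
    apply: Rt (eqR _ _ _) (Rt _ _ _ h (eqR _ _ _)); ring.
  - move=> x y z w; rewrite /tau => h1 h2.
    have h := RD _ _ _ _ h1 h2.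
    apply: Rt (eqR _ _ _) (Rt _ _ _ h (eqR _ _ _)); ring.
  - have Hm : forall x y w, tau x y -> tau (w * x) (w * y).
      move=> x y w; rewrite /tau => h.
      have h' := RM _ _ _ _ (Rr w) h.
      apply: Rt (eqR _ _ _) (Rt _ _ _ h' (eqR _ _ _)); ring.
    have Tt : forall x y z, tau x y -> tau y z -> tau x z.
      move=> x y z; rewrite /tau => h1 h2.
      have h := RD _ _ _ _ h1 h2.
      apply/Hplus; exists (y * a + y * b).
      apply: Rt (eqR _ _ _) (Rt _ _ _ h (eqR _ _ _)); ring.
    move=> x y z w h1 h2.
    apply: (Tt _ (y * z)).
      have := Hm _ _ z h1; rewrite /tau => h.
      apply: Rt (eqR _ _ _) (Rt _ _ _ h (eqR _ _ _)); ring.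
    exact: Hm.
have Tsub : forall x y, rho x y -> tau x y.
  move=> x y h; rewrite /tau.
  have h1 := RM _ _ _ _ h (Rr a).
  have h2 := RM _ _ _ _ (Rs _ _ h) (Rr b).
  have h3 := RD _ _ _ _ h1 h2.
  apply: Rt (eqR _ _ _) (Rt _ _ _ h3 (eqR _ _ _)); ring.
have Hcd : tau c d.
  rewrite /tau; apply: Rt (eqR _ _ _) (Rt _ _ _ H (eqR _ _ _)); ring.
case: (Hmax tau Tc Tsub) => [E|F].
  by right; apply/E.
left; have := F 1 0; rewrite /tau => h.
apply: Rt (eqR _ _ _) (Rt _ _ _ h (eqR _ _ _)); ring.
Qed.
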